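(* Let $\Sigma$ be a first-order language and let $\mathcal{T}_\Sigma$ be the family of all complete theories in $\Sigma$ (in the sense described in the context). Then $\mathcal{T}_\Sigma$ is $e$-minimal if and only if either $\Sigma=\emptyset$ or $\Sigma$ consists of exactly one constant symbol.
   Context: Theories are complete consistent first-order theories; structures have nonempty universes. If $\Sigma$ is relational, $\mathcal{T}_\Sigma$ is the family of all complete theories of $\Sigma$-structures. If $\Sigma$ contains function symbols (constants being $0$-ary function symbols), each $n$-ary function symbol $f$ is replaced by an $(n+1)$-ary predicate symbol $R_f$ interpreted as the graph $\{(\bar a,b)\mid f(\bar a)=b\}$, and $\mathcal{T}_\Sigma$ is the family of all complete theories of $\Sigma$-structures viewed in this relational language $\Sigma'$. For a family $\mathcal{T}$ of theories and a sentence $\varphi$ of its language, $\mathcal{T}_\varphi=\{T\in\mathcal{T}\mid \varphi\in T\}$. A family $\mathcal{T}$ is called $e$-minimal if it is infinite and for every sentence $\varphi$ of its language, $\mathcal{T}_\varphi$ is finite or $\mathcal{T}_{\neg\varphi}$ is finite. *)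

(* Defs.v *)
From Stdlib Require List.
From mathcomp Require Import all_boot.


Unset Printing Implicit Defensive.

(** * Signatures: relation symbols and function symbols (constants = 0-ary
    function symbols), each with an arity.  The symbol sets are arbitrary types
    (a language may be infinite). *)
Record signature := Signature {
  Rsym : Type;
  Fsym : Type;
  rar : Rsym -> nat;
  far : Fsym -> nat
}.
Arguments rar {s}.
Arguments far {s}.

(** The relational language Sigma' : every relation symbol R of Sigma is kept,
    and every n-ary function symbol f becomes an (n+1)-ary predicate symbol R_f. *)
Definition rsym' (S : signature) : Type := (Rsym S + Fsym S)%type.

Definition rar' {S : signature} (s : rsym' S) : nat :=
  match s with
  | inl r => rar r
  | inr f => (far f).+1
  end.

Inductive form (S : signature) : Type :=
| FBot : form S
| FEq : nat -> nat -> form S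
| FRel : forall s : rsym' S, ('I_(rar' s) -> nat) -> form S
| FNeg : form S -> form S
| FAnd : form S -> form S -> form S
| FOr : form S -> form S -> form S
| FImp : form S -> form S -> form S
| FAll : nat -> form S -> form S
| FEx : nat -> form S -> form S.

Arguments FBot {S}.
Arguments FEq {S}.
Arguments FRel {S}.
Arguments FNeg {S}.
Arguments FAnd {S}.
Arguments FOr {S}.
Arguments FImp {S}.
Arguments FAll {S}.
Arguments FEx {S}.

Fixpoint free_in {S : signature} (x : nat) (phi : form S) : Prop :=
  match phi with
  | FBot => False
  | FEq a b => x = a \/ x = b
  | FRel _ v => exists i, v i = x
  | FNeg p => free_in x p
  | FAnd p q | FOr p q | FImp p q => free_in x p \/ free_in x q
  | FAll y p | FEx y p => x <> y /\ free_in x p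
  end.

Definition sentence {S : signature} (phi : form S) : Prop :=
  forall x, ~ free_in x phi.

Record structure (S : signature) := Structure {
  dom : Type;
  dom_inh : dom;
  rint : forall r : Rsym S, ('I_(rar r) -> dom) -> Prop;
  fint : forall f : Fsym S, ('I_(far f) -> dom) -> dom
}.
Arguments dom {S}.
Arguments dom_inh {S}.
Arguments rint {S}.
Arguments fint {S}.

Definition upd {D : Type} (e : nat -> D) (x : nat) (d : D) : nat -> D :=
  fun y => if y == x then d else e y.

(** Interpretation of the Sigma'-atoms in a Sigma-structure: R_f is the graph
    {(a, b) | f(a) = b} of f. *)
Definition atom_sat {S : signature} (M : structure S) (s : rsym' S)
  : ('I_(rar' s) -> dom M) -> Prop :=
  match s as s0 return ('I_(rar' s0) -> dom M) -> Prop with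
  | inl r => fun a => rint M r a
  | inr f => fun a =>
      fint M f (fun i : 'I_(far f) => a (widen_ord (leqnSn (far f)) i)) = a ord_max
  end.

Fixpoint sat {S : signature} (M : structure S) (e : nat -> dom M) (phi : form S)
  : Prop :=
  match phi with
  | FBot => False
  | FEq a b => e a = e b
  | FRel s v => atom_sat M s (fun i => e (v i))
  | FNeg p => ~ sat M e p
  | FAnd p q => sat M e p /\ sat M e q
  | FOr p q => sat M e p \/ sat M e q
  | FImp p q => sat M e p -> sat M e q
  | FAll x p => forall d : dom M, sat M (upd e x d) p
  | FEx x p => exists d : dom M, sat M (upd e x d) p
  end.

Definition theory (S : signature) := form S -> Prop.

Definition Th {S : signature} (M : structure S) : theory S :=
  fun phi => sentence phi /\ forall e : nat -> dom M, sat M e phi.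

Definition T_Sigma (S : signature) : theory S -> Prop :=
  fun T => exists M : structure S, forall phi, T phi <-> Th M phi.

Definition family (S : signature) := theory S -> Prop.

Definition finite_family {S : signature} (F : family S) : Prop :=
  exists l : seq (theory S),
    forall T, F T -> exists2 T', List.In T' l & forall phi, T phi <-> T' phi.

Definition infinite_family {S : signature} (F : family S) : Prop :=
  ~ finite_family F.

Definition fam_restr {S : signature} (F : family S) (phi : form S) : family S :=
  fun T => F T /\ T phi.

Definition e_minimal {S : signature} (F : family S) : Prop :=
  infinite_family F /\
  forall phi : form S, sentence phi ->
    finite_family (fam_restr F phi) \/ finite_family (fam_restr F (FNeg phi)).

Definition empty_signature (S : signature) : Prop :=
  (Rsym S -> False) /\ (Fsym S -> False).

Definition one_constant_signature (S : signature) : Prop :=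
  (Rsym S -> False) /\ exists c : Fsym S, far c = 0 /\ forall f : Fsym S, f = c.

(* Main.v *)
Require Import Defs.
From mathcomp Require Import all_boot.
From mathcomp Require Import zify.
From Stdlib Require Import Setoid Classical ClassicalEpsilon FunctionalExtensionality.
From Stdlib Require List.

Definition geT (T : Type) (j : nat) : Prop :=
  exists L : list T, List.NoDup L /\ length L = j.

Lemma geT_le T n m : geT T n -> m <= n -> geT T m.
Proof.
move=> [L [HL Hlen]] Hmn. exists (List.firstn m L). split.
- rewrite -(List.firstn_skipn m L) in HL. exact: (List.NoDup_app_remove_r _ _ HL).
- rewrite List.firstn_length_le //; lia.
Qed.

Lemma memIn (T : eqType) (x : T) (s : seq T) : x \in s -> List.In x s.
Proof.
elim: s => //= y s IH; rewrite in_cons => /orP [/eqP ->|/IH]; auto.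
Qed.

Lemma Inmem (T : eqType) (x : T) (s : seq T) : List.In x s -> x \in s.
Proof.
elim: s => //= y s IH [->|/IH H]; rewrite in_cons ?eqxx ?H ?orbT //.
Qed.

Lemma uniqNoDup (T : eqType) (s : seq T) : uniq s -> List.NoDup s.
Proof.
elim: s => [|x s IH] /=; first by constructor.
move/andP=> [Hx Hu]; constructor; last exact: IH.
by move/Inmem; apply/negP.
Qed.

Lemma size_length (T : Type) (s : seq T) : size s = length s.
Proof. by elim: s => //= x s ->. Qed.

Lemma geT_ord n j : geT 'I_n j <-> j <= n.
Proof.
split.
- move=> [L [HL <-]].
  have Hi : List.incl L (enum 'I_n) by move=> x _; apply: memIn; rewrite mem_enum.
  have := List.NoDup_incl_length HL Hi. rewrite -[length (enum _)]size_length size_enum_ord. lia.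
- move=> Hj; apply: (geT_le _ n) => //.
  exists (enum 'I_n); split; first exact: uniqNoDup (enum_uniq _).
  by rewrite -size_length size_enum_ord.
Qed.

Lemma geT_nat j : geT nat j.
Proof. exists (List.seq 0 j); split; [exact: List.seq_NoDup | exact: List.length_seq]. Qed.

Lemma classify (T : Type) N :
  geT T N \/ exists n, n < N /\ geT T n /\ ~ geT T n.+1.
Proof.
elim: N => [|N [H|[n [H1 H2]]]].
- left; exists nil; split; [constructor|done].
- case: (classic (geT T N.+1)) => H'; [by left|right; exists N; split; auto].
- right; exists n; split; [lia|done].
Qed.

Lemma exact_size (T : Type) n : geT T n -> ~ geT T n.+1 ->
  forall j, geT T j <-> j <= n.
Proof.
move=> H1 H2 j; split.
- move=> Hj; case: (leqP j n) => // Hlt; exfalso; apply: H2; apply: geT_le Hj _; lia.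
- by move=> Hj; apply: geT_le H1 _.
Qed.

Definition Cons {X Y : Type} (P : list (X * Y)) : Prop :=
  forall p q, List.In p P -> List.In q P -> (p.1 = q.1 <-> p.2 = q.2).

Lemma dedup {X Y : Type} (P : list (X * Y)) : exists Q,
  (forall q, List.In q Q -> List.In q P) /\ List.NoDup (List.map fst Q) /\
  (forall p, List.In p P -> exists2 q, List.In q Q & q.1 = p.1) /\ length Q <= length P.
Proof.
elim: P => [|p P [Q [HQ1 [HQ2 [HQ3 HQ4]]]]].
- exists nil; split; [done|split; [constructor|split; done]].
- case: (classic (exists2 q, List.In q Q & q.1 = p.1)) => [[q Hq Hqe]|Hn].
  + exists Q; split; [by move=> q' /HQ1; right|split; [done|split]].
    * move=> p' [<-|Hp']; [by exists q|exact: HQ3].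
    * simpl; lia.
  + exists (p :: Q); split; [by move=> q [<-|/HQ1]; [left|right]|split].
    * simpl; constructor => //. move=> /List.in_map_iff [q [Hq1 Hq2]]; apply: Hn; by exists q.
    * split; last by simpl; lia.
      move=> p' [E|Hp']; first by exists p; [left|rewrite E].
      have [q Hq Hqe] := HQ3 p' Hp'. by exists q; [right|].
Qed.

Lemma nodup_snd {X Y : Type} (P Q : list (X * Y)) :
  Cons P -> (forall q, List.In q Q -> List.In q P) ->
  List.NoDup (List.map fst Q) -> List.NoDup (List.map snd Q).
Proof.
move=> HC; elim: Q => [|q Q IH] HQ /= HN; first by constructor.
move/List.NoDup_cons_iff: HN => [Hn HN]. constructor; last by apply: IH => // x Hx; apply: HQ; right.
move/List.in_map_iff=> [q' [Hq'1 Hq'2]]. apply: Hn. apply/List.in_map_iff; exists q'; split => //.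
apply/(HC q' q); [by apply: HQ; right|by apply: HQ; left|done].
Qed.

Lemma ext {X Y : Type} (P : list (X * Y)) N : Cons P -> length P < N ->
  (forall j, j <= N -> geT X j -> geT Y j) -> forall a : X, exists b : Y, Cons ((a, b) :: P).
Proof.
move=> HC HN HS a.
case: (classic (exists2 q, List.In q P & q.1 = a)) => [[q Hq Hqa]|Hn].
- exists q.2 => p1 p2 [<-|H1] [<-|H2] /=.
  + tauto.
  + rewrite -Hqa; exact: HC.
  + rewrite -Hqa; exact: HC.
  + exact: HC.
- have [b Hb] : exists b : Y, forall q, List.In q P -> q.2 <> b.
  { have [Q [HQ1 [HQ2 [HQ3 HQ4]]]] := dedup P.
    have HX : geT X (length Q).+1.
    { exists (a :: List.map fst Q); split.
      - constructor => //. move/List.in_map_iff=> [q [Hq1 Hq2]]; apply: Hn; exists q; auto.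
      - by rewrite /= List.length_map. }
    have [L [HL HLlen]] := HS (length Q).+1 ltac:(lia) HX.
    apply: NNPP => Hno.
    have Hincl : List.incl L (List.map snd Q).
    { move=> b Hb; apply: NNPP => Hb'; apply: Hno; exists b => q Hq Hqb; subst b.
      have [q' Hq' Hq'e] := HQ3 q Hq. apply: Hb'.
      have E : q'.2 = q.2 by apply/(HC q' q) => //; apply: HQ1.
      rewrite -E; exact: List.in_map. }
    have := List.NoDup_incl_length HL Hincl. rewrite List.length_map. lia. }
  exists b => p1 p2 [<-|H1] [<-|H2] /=.
  + tauto.
  + split=> E; exfalso; [apply: Hn; by exists p2|exact: (Hb p2 H2)].
  + split=> E; exfalso; [apply: Hn; by exists p1|exact: (Hb p1 H1)].
  + exact: HC.
Qed.

Definition swp {X Y : Type} (p : X * Y) : Y * X := (p.2, p.1).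

Lemma Cons_swap {X Y : Type} (P : list (X * Y)) : Cons P -> Cons (List.map swp P).
Proof.
move=> H p q /List.in_map_iff [p' [<- Hp']] /List.in_map_iff [q' [<- Hq']] /=.
have := H p' q' Hp' Hq'; tauto.
Qed.

Lemma ext_back {X Y : Type} (P : list (X * Y)) N : Cons P -> length P < N ->
  (forall j, j <= N -> geT Y j -> geT X j) -> forall b : Y, exists a : X, Cons ((a, b) :: P).
Proof.
move=> HC HN HS b.
have [a Ha] := ext (List.map swp P) N (Cons_swap _ HC) ltac:(rewrite List.length_map; lia) HS b.
exists a. have := Cons_swap _ Ha. rewrite /= List.map_map (List.map_ext _ id) ?List.map_id //.
by case.
Qed.

Fixpoint depth {S : signature} (phi : form S) : nat :=
  match phi with
  | FBot | FEq _ _ | FRel _ _ => 0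
  | FNeg p => depth p
  | FAnd p q | FOr p q | FImp p q => maxn (depth p) (depth q)
  | FAll _ p | FEx _ p => (depth p).+1
  end.

Definition ConstOK {S : signature} (A B : structure S) (P : list (dom A * dom B)) :=
  forall f v w, List.In (fint A f v, fint B f w) P.

Lemma EF (S : signature) (HR : Rsym S -> False) (A B : structure S) N
  (HS : forall j, j <= N -> (geT (dom A) j <-> geT (dom B) j)) (phi : form S) :
  forall P e e', Cons P -> ConstOK A B P ->
  (forall x, free_in x phi -> List.In (e x, e' x) P) ->
  length P + depth phi <= N -> (sat A e phi <-> sat B e' phi).
Proof.
elim: phi => [|a b|s v|p IH|p IHp q IHq|p IHp q IHq|p IHp q IHq|x p IH|x p IH]
  P e e' HC HK HV HL /=.
- tauto.
- apply: (HC (e a, e' a) (e b, e' b)); apply: HV; simpl; auto.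
- clear HL; case: s v HV => [r|f] v HV; first by case: (HR r).
  exact: (HC _ _ (HK f _ _) (HV (v ord_max) (ex_intro _ ord_max erefl))).
- have := IH P e e' HC HK HV HL; tauto.
- have h1 := IHp P e e' HC HK (fun y hy => HV y (or_introl hy)) ltac:(simpl in HL; lia).
  have h2 := IHq P e e' HC HK (fun y hy => HV y (or_intror hy)) ltac:(simpl in HL; lia).
  tauto.
- have h1 := IHp P e e' HC HK (fun y hy => HV y (or_introl hy)) ltac:(simpl in HL; lia).
  have h2 := IHq P e e' HC HK (fun y hy => HV y (or_intror hy)) ltac:(simpl in HL; lia).
  tauto.
- have h1 := IHp P e e' HC HK (fun y hy => HV y (or_introl hy)) ltac:(simpl in HL; lia).
  have h2 := IHq P e e' HC HK (fun y hy => HV y (or_intror hy)) ltac:(simpl in HL; lia).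
  tauto.
- have step : forall d d', Cons ((d, d') :: P) ->
     (sat A (upd e x d) p <-> sat B (upd e' x d') p).
  { move=> d d' HC'. apply: (IH ((d, d') :: P) _ _ HC').
    - by move=> f v w; right.
    - move=> y hy; rewrite /upd; case: eqP => [_|Hne]; [by left|right; apply: HV; simpl; auto].
    - simpl in HL |- *; lia. }
  split.
  + move=> H d'. have [d Hd] := ext_back P N HC ltac:(simpl in HL; lia) (fun j hj => proj2 (HS j hj)) d'.
    by apply/(step d d' Hd).
  + move=> H d. have [d' Hd] := ext P N HC ltac:(simpl in HL; lia) (fun j hj => proj1 (HS j hj)) d.
    by apply/(step d d' Hd).
- have step : forall d d', Cons ((d, d') :: P) ->
     (sat A (upd e x d) p <-> sat B (upd e' x d') p).
  { move=> d d' HC'. apply: (IH ((d, d') :: P) _ _ HC').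
    - by move=> f v w; right.
    - move=> y hy; rewrite /upd; case: eqP => [_|Hne]; [by left|right; apply: HV; simpl; auto].
    - simpl in HL |- *; lia. }
  split.
  + move=> [d H]. have [d' Hd] := ext P N HC ltac:(simpl in HL; lia) (fun j hj => proj1 (HS j hj)) d.
    exists d'; by apply/(step d d' Hd).
  + move=> [d' H]. have [d Hd] := ext_back P N HC ltac:(simpl in HL; lia) (fun j hj => proj2 (HS j hj)) d'.
    exists d; by apply/(step d d' Hd).
Qed.

Lemma init (S : signature) (HF : forall f g : Fsym S, f = g) (HF0 : forall f : Fsym S, far f = 0)
  (A B : structure S) :
  exists P0 : list (dom A * dom B), Cons P0 /\ ConstOK A B P0 /\ length P0 <= 1.
Proof.
case: (classic (exists c : Fsym S, True)) => [[c _]|Hno].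
- exists ((fint A c (fun _ => dom_inh A), fint B c (fun _ => dom_inh B)) :: nil).
  split; [by move=> p q [<-|[]] [<-|[]]|split; last done].
  move=> f v w. have E := HF f c. subst f.
  have -> : v = (fun _ => dom_inh A).
  { apply: functional_extensionality => i. exfalso; case: i => m; by rewrite HF0. }
  have -> : w = (fun _ => dom_inh B).
  { apply: functional_extensionality => i. exfalso; case: i => m; by rewrite HF0. }
  by left.
- exists nil; split; [by move=> p q []|split; last done].
  move=> f; case: Hno; by exists f.
Qed.

Lemma Equiv (S : signature) (HR : Rsym S -> False) (HF : forall f g : Fsym S, f = g)
  (HF0 : forall f : Fsym S, far f = 0) (A B : structure S) N
  (HS : forall j, j <= N -> (geT (dom A) j <-> geT (dom B) j)) (psi : form S) :
  sentence psi -> depth psi < N -> forall e e', sat A e psi <-> sat B e' psi.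
Proof.
move=> Hs Hd e e'. have [P0 [HC [HK HL]]] := init S HF HF0 A B.
apply: (EF S HR A B N HS psi P0) => //; last by lia.
by move=> x /Hs.
Qed.

Fixpoint neqs {S : signature} (j i : nat) : form S :=
  match i with
  | 0 => FNeg FBot
  | i'.+1 => FAnd (neqs j i') (FNeg (FEq j i'))
  end.

Fixpoint G {S : signature} (m j : nat) : form S :=
  match m with
  | 0 => FNeg FBot
  | m'.+1 => FEx j (FAnd (neqs j j) (G m' j.+1))
  end.

Lemma neqs_sat S (M : structure S) e j i :
  sat M e (neqs j i) <-> forall k, k < i -> e j <> e k.
Proof.
elim: i => [|i IH] /=; first by split => // _ [].
rewrite IH; split.
- move=> [H1 H2] k Hk. case: (ltngtP k i) => [Hlt|Hgt|->] //; [exact: H1|lia].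
- move=> H; split; [move=> k Hk; apply: H; lia|apply: H; lia].
Qed.

Lemma neqs_free S x j i : free_in x (@neqs S j i) -> x = j \/ x < i.
Proof.
elim: i => [|i IH] /=; first done. move=> [/IH|[E|E]]; lia.
Qed.

Lemma G_free S m : forall j x, free_in x (@G S m j) -> x < j.
Proof.
elim: m => [|m IH] j x //= [Hx [/neqs_free|/IH]]; lia.
Qed.

Lemma G_sentence S m : sentence (@G S m 0).
Proof. by move=> x /G_free. Qed.

Lemma G_sat S (M : structure S) m : forall j e,
  List.NoDup (List.map e (List.seq 0 j)) ->
  (sat M e (G m j) <-> exists L, length L = m /\ List.NoDup (List.map e (List.seq 0 j) ++ L)%list).
Proof.
elim: m => [|m IH] j e Hnd /=.
- split; [move=> _; exists nil; by rewrite List.app_nil_r|by move=> _ []].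
- have Emap : forall d, List.map (upd e j d) (List.seq 0 j.+1) = (List.map e (List.seq 0 j) ++ d :: nil)%list.
  { move=> d. rewrite List.seq_S List.map_app /=. rewrite /upd eqxx. congr (_ ++ _)%list.
    apply: List.map_ext_in => k /List.in_seq Hk. case: eqP => // E; lia. }
  split.
  + move=> [d [/neqs_sat Hne HG]].
    have Hnd' : List.NoDup (List.map (upd e j d) (List.seq 0 j.+1)).
    { rewrite Emap. apply: List.NoDup_app; [done|by constructor => //; constructor|move=> a Ha [Ea|[]]]. subst a.
      move/List.in_map_iff: Ha => [k [Ek /List.in_seq Hk]].
      apply: (Hne k); first lia. rewrite /upd eqxx. have -> : (k == j) = false by apply/eqP; lia.
      by rewrite Ek. }
    have [L [HL1 HL2]] := proj1 (IH _ _ Hnd') HG.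
    exists (d :: L); split; first by rewrite /= HL1.
    by move: HL2; rewrite Emap -List.app_assoc.
  + move=> [[|d L] [//= HL HN]].
    have Hdn : ~ List.In d (List.map e (List.seq 0 j)).
    { move=> Hin; apply: (List.NoDup_remove_2 _ _ _ HN). apply: List.in_or_app; by left. }
    have HN' : List.NoDup (List.map e (List.seq 0 j) ++ d :: nil)%list.
    { move: HN. rewrite (_ : d :: L = (d :: nil) ++ L)%list // List.app_assoc.
      exact: List.NoDup_app_remove_r. }
    exists d; split.
    * apply/neqs_sat => k Hk. rewrite /upd eqxx. have -> : (k == j) = false by apply/eqP; lia.
      move=> E; apply: Hdn; rewrite E; apply: List.in_map; apply/List.in_seq; lia.
    * have Hnd' : List.NoDup (List.map (upd e j d) (List.seq 0 j.+1)) by rewrite Emap.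
      apply/(IH _ _ Hnd'). exists L; split; first by case: HL.
      by rewrite Emap -List.app_assoc.
Qed.

Lemma G_sat0 S (M : structure S) m e : sat M e (G m 0) <-> geT (dom M) m.
Proof.
rewrite (G_sat S M m 0 e); last by constructor.
split; move=> [L [H1 H2]]; exists L; by split.
Qed.

Lemma inf_lemma (S : signature) (F : theory S -> Prop) (M : nat -> structure S) c :
  (forall k, F (Th (M k))) ->
  (forall k, geT (dom (M k)) (k + c) /\ ~ geT (dom (M k)) (k + c).+1) ->
  infinite_family F.
Proof.
move=> HF Hsz [l Hl].
have Hdist : forall k1 k2, (forall phi, Th (M k1) phi <-> Th (M k2) phi) -> k1 <= k2.
{ move=> k1 k2 E. case: (leqP k1 k2) => // Hlt. exfalso.
  have H1 : Th (M k1) (G (k1 + c) 0).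
  { split; first exact: G_sentence. move=> e; apply/G_sat0; exact: (proj1 (Hsz k1)). }
  have [_ H2] := proj1 (E _) H1.
  have /G_sat0 Hg := H2 (fun _ => dom_inh (M k2)).
  apply: (proj2 (Hsz k2)). apply: geT_le Hg _. lia. }
have Hchoose : forall k : 'I_(length l).+1, exists i : 'I_(length l),
    forall phi, Th (M k) phi <-> List.nth i l (fun _ => False) phi.
{ move=> k. have [T' HT' E] := Hl _ (HF k).
  have [i [Hi Hnth]] := List.In_nth l T' (fun _ => False) HT'.
  have Hi' : i < length l by apply/ltP.
  exists (Ordinal Hi') => phi /=. by rewrite Hnth. }
pose g := fun k => proj1_sig (constructive_indefinite_description _ (Hchoose k)).
have Hg : forall (k : 'I_(length l).+1) phi, Th (M k) phi <-> List.nth (g k) l (fun _ => False) phi.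
{ move=> k. exact: (proj2_sig (constructive_indefinite_description _ (Hchoose k))). }
have Hinj : injective g.
{ move=> k1 k2 E. apply: val_inj => /=.
  have E12 : forall phi, Th (M k1) phi <-> Th (M k2) phi.
  { move=> phi. have := Hg k1 phi; have := Hg k2 phi. rewrite E. tauto. }
  apply/eqP; rewrite eqn_leq; apply/andP; split; apply: Hdist => // phi.
  by rewrite E12. }
have := leq_card g Hinj. rewrite !card_ord. lia.
Qed.

Definition proj0 {T : Type} (t : T) (n : nat) : ('I_n -> T) -> T :=
  match n with 0 => fun _ => t | n'.+1 => fun v => v ord0 end.

Lemma proj0_const T (t d : T) n : 0 < n -> proj0 t n (fun _ => d) = d.
Proof. by case: n. Qed.

Lemma ord_sz n k : geT 'I_n (k) /\ ~ geT 'I_n k.+1 <-> k = n.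
Proof. rewrite !geT_ord; split; [move=> [H1 H2]; lia|move=> ->; split; lia]. Qed.

Lemma not_emin (S : signature) (phi : form S) (M1 M2 : nat -> structure S) c1 c2 :
  sentence phi -> (forall k e, sat (M1 k) e phi) -> (forall k e, ~ sat (M2 k) e phi) ->
  (forall k, geT (dom (M1 k)) (k + c1) /\ ~ geT (dom (M1 k)) (k + c1).+1) ->
  (forall k, geT (dom (M2 k)) (k + c2) /\ ~ geT (dom (M2 k)) (k + c2).+1) ->
  ~ e_minimal (T_Sigma S).
Proof.
move=> Hs H1 H2 S1 S2 [_ H].
case: (H phi Hs) => Hf.
- apply: (inf_lemma S _ M1 c1 _ S1 Hf) => k.
  split; first by exists (M1 k).
  split; [exact: Hs|exact: (H1 k)].
- apply: (inf_lemma S _ M2 c2 _ S2 Hf) => k.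
  split; first by exists (M2 k).
  split; [exact: Hs|move=> e; exact: (H2 k e)].
Qed.

Definition mk (S : signature) n (Pr : Prop)
  (fi : forall f : Fsym S, ('I_(far f) -> 'I_n.+1) -> 'I_n.+1) : structure S :=
  @Structure S 'I_n.+1 ord0 (fun _ _ => Pr) fi.

Theorem theorem2p1 (S : signature) :
  e_minimal (T_Sigma S) <-> empty_signature S \/ one_constant_signature S.
Proof.
split.
- move=> Hem. apply: NNPP => Hno.
  case: (classic (exists r : Rsym S, True)) => [[r _]|HnR].
  { apply: (not_emin S (FAll 0 (FRel (inl r) (fun _ => 0)))
      (fun k => mk S k True (fun _ _ => ord0)) (fun k => mk S k False (fun _ _ => ord0)) 1 1).
    - by move=> x /= [Hx [i Hi]]; apply: Hx; rewrite -Hi.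
    - by move=> k e /= d.
    - move=> k e /= H. exact: (H ord0).
    - move=> k; apply/ord_sz; lia.
    - move=> k; apply/ord_sz; lia.
    - exact: Hem. }
  have HR : Rsym S -> False by move=> r; apply: HnR; exists r.
  case: (classic (exists f : Fsym S, True)) => [[f _]|HnF]; last first.
  { apply: Hno; left; split => // f; apply: HnF; by exists f. }
  case: (classic (exists g : Fsym S, 0 < far g)) => [[g Hg]|Hn0].
  { apply: (not_emin S (FAll 0 (FRel (inr g) (fun _ => 0)))
      (fun k => mk S k.+1 True (fun h v => proj0 ord0 (far h) v))
      (fun k => mk S k.+1 True (fun _ _ => ord0)) 2 2).
    - by move=> x /= [Hx [i Hi]]; apply: Hx; rewrite -Hi.
    - move=> k e /= d. by rewrite proj0_const.
    - move=> k e /= H. have := H ord_max. rewrite /upd /=. by move/(congr1 val).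
    - move=> k; apply/ord_sz; lia.
    - move=> k; apply/ord_sz; lia.
    - exact: Hem. }
  have H0 : forall h : Fsym S, far h = 0.
  { move=> h; case E: (far h) => [|m] //; exfalso; apply: Hn0; exists h; by rewrite E. }
  case: (classic (exists g : Fsym S, g <> f)) => [[g Hgf]|Hall]; last first.
  { apply: Hno; right; split => //; exists f; split => // h.
    apply: NNPP => Hne; apply: Hall; by exists h. }
  apply: (not_emin S (FEx 0 (FAnd (FRel (inr f) (fun _ => 0)) (FRel (inr g) (fun _ => 0))))
      (fun k => mk S k.+1 True (fun _ _ => ord0))
      (fun k => mk S k.+1 True (fun h _ => if excluded_middle_informative (h = f) then ord0 else ord_max))
      2 2).
  + by move=> x /= [Hx [[i Hi]|[i Hi]]]; apply: Hx; rewrite -Hi.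
  + move=> k e /=. by exists ord0.
  + move=> k e /= [d [E1 E2]]. move: E1 E2.
    destruct (excluded_middle_informative (f = f)) as [Hff0|Hff]; last by case: Hff.
    destruct (excluded_middle_informative (g = f)) as [Hgf'|Hgf0]; first by case: (Hgf Hgf').
    rewrite /=. move=> E1 E2. have := congr1 val (etrans E1 (esym E2)). done.
  + move=> k; apply/ord_sz; lia.
  + move=> k; apply/ord_sz; lia.
  + exact: Hem.
- move=> Hsig.
  have [HR [HF HF0]] : (Rsym S -> False) /\ (forall f g : Fsym S, f = g) /\ (forall f : Fsym S, far f = 0).
  { case: Hsig => [[HR HF]|[HR [c [Hc Hall]]]].
    - split; first exact: HR. split; move=> f; case: (HF f).
    - split; first exact: HR. split.
      + move=> f g; by rewrite (Hall f) (Hall g).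
      + move=> f; by rewrite (Hall f). }
  pose C := fun k => mk S k False (fun _ _ => ord0).
  pose Ainf := @Structure S nat 0 (fun _ _ => False) (fun _ _ => 0).
  have small : forall psi, sentence psi -> ~ sat Ainf (fun _ => 0) psi ->
      finite_family (fam_restr (T_Sigma S) psi).
  { move=> psi Hs Hn.
    exists (List.map (fun k => Th (C k)) (List.seq 0 (depth psi).+1)).
    move=> T [[M HM] HT]. have [_ Hsat] := proj1 (HM psi) HT.
    case: (classify (dom M) (depth psi).+1) => [Hbig|[n [Hn' [H1 H2]]]].
    - exfalso; apply: Hn.
      have HS : forall j, j <= (depth psi).+1 -> (geT (dom M) j <-> geT (dom Ainf) j).
      { move=> j Hj; split => _; [exact: geT_nat|exact: geT_le Hbig Hj]. }
      apply/(Equiv S HR HF HF0 M Ainf _ HS psi Hs (ltnSn _) (fun _ => dom_inh M)).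
      exact: Hsat.
    - case: n Hn' H1 H2 => [|k] Hn' H1 H2.
      { exfalso; apply: H2; exists (dom_inh M :: nil); split; [constructor; [done|constructor]|done]. }
      exists (Th (C k)).
      + apply/List.in_map_iff; exists k; split => //; apply/List.in_seq; lia.
      + move=> chi. rewrite HM.
        have HS : forall j, j <= (depth chi).+1 -> (geT (dom M) j <-> geT (dom (C k)) j).
        { move=> j _. by rewrite (exact_size _ _ H1 H2) /= geT_ord. }
        rewrite /Th; split => [[Hs' Hsat']|[Hs' Hsat']]; split => // e.
        * apply/(Equiv S HR HF HF0 M (C k) _ HS chi Hs' (ltnSn _) (fun _ => dom_inh M) e).
          exact: Hsat'.
        * apply/(Equiv S HR HF HF0 M (C k) _ HS chi Hs' (ltnSn _) e (fun _ => ord0)).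
          exact: Hsat'. }
  split.
  + apply: (inf_lemma S _ C 1) => k; first by exists (C k).
    apply/ord_sz; lia.
  + move=> phi Hs. case: (classic (sat Ainf (fun _ => 0) phi)) => Hp.
    * right; apply: small => // H; exact: (H Hp).
    * left; exact: small.
Qed.
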